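(* Let $M$ be an infinite cancellative finitely generated hyperbolic monoid. Then $M$ contains an element of infinite order.
   Context: Cancellative means both left and right cancellative. For a monoid $M$ with finite generating set $A$, the (right) Cayley digraph has vertex set $M$ and a directed edge from $m$ to $ma$ for every $m\in M$, $a\in A$. For a digraph $D$, a directed path $x_0x_1\ldots x_n$ has edges $x_ix_{i+1}$ and length $n$; $d(x,y)$ is the length of a shortest directed $x$-$y$ path ($\infty$ if none), and such a shortest path is an $x$-$y$ geodesic. The out-ball $\mathcal{B}^+_k(x)$ is $\{y: d(x,y)\le k\}$, the in-ball $\mathcal{B}^-_k(x)$ is $\{y: d(y,x)\le k\}$; for a vertex set or path $Q$, $\mathcal{B}^\pm_k(Q)$ is the union of the corresponding balls around its vertices. A geodesic triangle consists of three vertices and, for each pair of them, a geodesic between them (in one of the two directions); these are its sides. It is $\delta$-thin if whenever $P,Q,R$ are its sides such that the start vertex of $P$ is the start or end vertex of $Q$ and the end vertex of $P$ is the start or end vertex of $R$, then $P\subseteq \mathcal{B}^+_\delta(Q)\cup\mathcal{B}^-_\delta(R)$. A digraph is $\delta$-hyperbolic if all its geodesic triangles are $\delta$-thin, and hyperbolic if it is $\delta$-hyperbolic for some $\delta\ge 0$. A finitely generated monoid is hyperbolic if its Cayley digraph with respect to a finite generating set is hyperbolic. *)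

(* Defs.v *)
From Stdlib Require Import List.
Import ListNotations.
Set Implicit Arguments.

Record Monoid := {
  carrier :> Type;
  mmul : carrier -> carrier -> carrier;
  mone : carrier;
  mmulA : forall x y z, mmul x (mmul y z) = mmul (mmul x y) z;
  mmul1l : forall x, mmul mone x = x;
  mmul1r : forall x, mmul x mone = x
}.

Definition cancellative (M : Monoid) : Prop :=
  (forall a x y : M, mmul M a x = mmul M a y -> x = y) /\
  (forall a x y : M, mmul M x a = mmul M y a -> x = y).

Definition generates {M : Monoid} (A : list M) : Prop :=
  forall x : M, exists w : list M,
    Forall (fun a => In a A) w /\ x = fold_right (mmul M) (mone M) w.

Definition finitely_generated (M : Monoid) : Prop :=
  exists A : list M, generates A.

Definition infinite_monoid (M : Monoid) : Prop :=
  ~ (exists l : list M, forall x : M, In x l).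

Fixpoint mpow {M : Monoid} (x : M) (n : nat) : M :=
  match n with 0 => mone M | S k => mmul M x (mpow x k) end.

Definition infinite_order {M : Monoid} (x : M) : Prop :=
  forall m n : nat, mpow x m = mpow x n -> m = n.

Section Digraph.
Variable V : Type.
Variable E : V -> V -> Prop.

(** [dpath x l]: x :: l is a directed path; its end vertex is [last l x]
    and its length is [length l]. *)
Fixpoint dpath (x : V) (l : list V) : Prop :=
  match l with
  | [] => True
  | y :: l' => E x y /\ dpath y l'
  end.

Definition dist_le (x y : V) (k : nat) : Prop :=
  exists l, dpath x l /\ last l x = y /\ length l <= k.

(** A side: start vertex together with the rest of the path. *)
Definition side := (V * list V)%type.
Definition sstart (s : side) : V := fst s.
Definition send (s : side) : V := last (snd s) (fst s).
Definition on_side (s : side) (z : V) : Prop := In z (fst s :: snd s).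

Definition geodesic (s : side) : Prop :=
  dpath (fst s) (snd s) /\
  forall l', dpath (fst s) l' -> last l' (fst s) = send s ->
             length (snd s) <= length l'.

Definition connects (s : side) (a b : V) : Prop :=
  (sstart s = a /\ send s = b) \/ (sstart s = b /\ send s = a).

Definition geodesic_triangle (a b c : V) (P1 P2 P3 : side) : Prop :=
  geodesic P1 /\ geodesic P2 /\ geodesic P3 /\
  connects P1 a b /\ connects P2 b c /\ connects P3 a c.

(** The thinness condition for an ordered choice (P,Q,R) of the sides:
    P ⊆ B^+_δ(Q) ∪ B^-_δ(R). *)
Definition thin_cond (d : nat) (P Q R : side) : Prop :=
  (sstart P = sstart Q \/ sstart P = send Q) ->
  (send P = sstart R \/ send P = send R) ->
  forall z, on_side P z ->
    (exists q, on_side Q q /\ dist_le q z d) \/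
    (exists r, on_side R r /\ dist_le z r d).

Definition triangle_thin (d : nat) (P1 P2 P3 : side) : Prop :=
  thin_cond d P1 P2 P3 /\ thin_cond d P1 P3 P2 /\
  thin_cond d P2 P1 P3 /\ thin_cond d P2 P3 P1 /\
  thin_cond d P3 P1 P2 /\ thin_cond d P3 P2 P1.

Definition delta_hyperbolic (d : nat) : Prop :=
  forall a b c P1 P2 P3, geodesic_triangle a b c P1 P2 P3 ->
    triangle_thin d P1 P2 P3.

Definition hyperbolic_digraph : Prop := exists d : nat, delta_hyperbolic d.
End Digraph.

Definition cayley_edge {M : Monoid} (A : list M) (m m' : M) : Prop :=
  exists a, In a A /\ m' = mmul M m a.

Definition hyperbolic_monoid (M : Monoid) : Prop :=
  exists A : list M, generates A /\ hyperbolic_digraph (cayley_edge A).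

(* Main.v *)
Require Import Defs.
From Stdlib Require Import List Lia Arith ZArith Classical ClassicalEpsilon.
Import ListNotations.

Section Paths.
Variable V : Type.
Variable E : V -> V -> Prop.

Lemma last_cons (y x : V) l : last (y :: l) x = last l y.
Proof.
  revert y x; induction l as [|z l IH]; intros y x; auto.
  change (last (y :: z :: l) x) with (last (z :: l) x). rewrite IH. symmetry; apply IH.
Qed.

Lemma dpath_app x l1 l2 :
  dpath E x l1 -> dpath E (last l1 x) l2 -> dpath E x (l1 ++ l2).
Proof.
  revert x; induction l1 as [|y l1 IH]; intros x H1 H2; [simpl in *; auto|simpl in H1 |- *].
  destruct H1 as [Hxy Hy]; split; auto.
  apply IH; auto. rewrite last_cons in H2; auto.
Qed.

Lemma last_app_gen (l1 l2 : list V) x :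
  last (l1 ++ l2) x = last l2 (last l1 x).
Proof.
  revert x; induction l1 as [|y l1 IH]; intros x; [reflexivity|].
  simpl app. rewrite last_cons, IH, last_cons. reflexivity.
Qed.

Lemma dist_le_refl x : dist_le E x x 0.
Proof. exists []; simpl; auto. Qed.

Lemma dist_le_mono x y a b : a <= b -> dist_le E x y a -> dist_le E x y b.
Proof. intros Hab (l & H1 & H2 & H3); exists l; repeat split; auto; lia. Qed.

Lemma dist_le_trans x y z a b :
  dist_le E x y a -> dist_le E y z b -> dist_le E x z (a + b).
Proof.
  intros (l1 & H1 & H2 & H3) (l2 & K1 & K2 & K3).
  exists (l1 ++ l2); repeat split.
  - apply dpath_app; auto. rewrite H2; auto.
  - rewrite last_app_gen, H2; auto.
  - rewrite length_app; lia.
Qed.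

Lemma dist_le_edge x y : E x y -> dist_le E x y 1.
Proof. intros H; exists [y]; simpl; auto. Qed.

Lemma on_path_split x l z :
  dpath E x l -> In z (x :: l) ->
  exists a b, a + b = length l /\ dist_le E x z a /\ dist_le E z (last l x) b.
Proof.
  revert x; induction l as [|y l IH]; intros x Hp Hin.
  - destruct Hin as [<-|[]]. exists 0, 0; simpl; repeat split; apply dist_le_refl.
  - destruct Hp as [Hxy Hp]. destruct Hin as [<-|Hin].
    + exists 0, (length (y :: l)). split; [simpl; lia|]. split; [apply dist_le_refl|].
      exists (y :: l); repeat split; simpl; auto.
    + destruct (IH y Hp Hin) as (a & b & Hab & Ha & Hb).
      exists (S a), b. split; [simpl; lia|]. split.
      * change (S a) with (1 + a). eapply dist_le_trans; [apply dist_le_edge; eauto|auto].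
      * rewrite last_cons; auto.
Qed.

Lemma nth_dist x l i j :
  dpath E x l -> i <= j -> j <= length l ->
  dist_le E (nth i (x :: l) x) (nth j (x :: l) x) (j - i).
Proof.
  revert x i j; induction l as [|y l IH]; intros x i j Hp Hij Hj.
  - simpl in Hj. assert (i = 0) by lia; assert (j = 0) by lia; subst; apply dist_le_refl.
  - destruct Hp as [Hxy Hp]. destruct i as [|i].
    + destruct j as [|j]. apply dist_le_refl.
      simpl nth at 1. replace (S j - 0) with (1 + (j - 0)) by lia.
      eapply dist_le_trans; [apply dist_le_edge; eauto|].
      change (nth (S j) (x :: y :: l) x) with (nth j (y :: l) x).
      replace (nth j (y :: l) x) with (nth j (y :: l) y).
      apply (IH y 0 j); simpl in *; auto; lia.
      destruct j; auto. simpl. apply nth_indep. simpl in Hj. lia.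
    + destruct j as [|j]; [lia|].
      change (nth (S i) (x :: y :: l) x) with (nth i (y :: l) x).
      change (nth (S j) (x :: y :: l) x) with (nth j (y :: l) x).
      simpl in Hj.
      replace (nth i (y :: l) x) with (nth i (y :: l) y).
      replace (nth j (y :: l) x) with (nth j (y :: l) y).
      replace (S j - S i) with (j - i) by lia. apply IH; auto; lia.
      apply nth_indep; simpl; lia. apply nth_indep; simpl; lia.
Qed.

Lemma nth_last (x : V) l : nth (length l) (x :: l) x = last l x.
Proof.
  revert x; induction l as [|y l IH]; intros x; [reflexivity|].
  rewrite last_cons, <- (IH y). simpl length. change (nth (S (length l)) (x :: y :: l) x) with (nth (length l) (y :: l) x).
  apply nth_indep. simpl; lia.
Qed.

End Paths.

Lemma min_exists (P : nat -> Prop) : (exists n, P n) -> exists n, P n /\ forall m, P m -> n <= m.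
Proof.
  intros [n Hn]. induction n as [n IH] using lt_wf_ind.
  destruct (classic (exists m, m < n /\ P m)) as [(m & Hm & HPm)|Hno].
  - exact (IH m Hm HPm).
  - exists n; split; auto. intros m Hm. destruct (le_gt_dec n m); auto.
    exfalso; apply Hno; eauto.
Qed.


Lemma mpow_comm (M : Monoid) (x : M) n : mmul M (mpow x n) x = mmul M x (mpow x n).
Proof.
  induction n as [|n IH]; simpl. rewrite mmul1l, mmul1r; auto.
  rewrite <- mmulA, IH; auto.
Qed.

Lemma mpow_add (M : Monoid) (x : M) m n : mpow x (m + n) = mmul M (mpow x m) (mpow x n).
Proof.
  induction m as [|m IH]; simpl. rewrite mmul1l; auto. rewrite IH, mmulA; auto.
Qed.

Lemma php {T} (f : nat -> T) (D : list T) N :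
  (forall i, i <= N -> In (f i) D) -> length D <= N ->
  exists i j, i < j <= N /\ f i = f j.
Proof.
  intros HD HN. apply NNPP; intros Hno.
  assert (Hnd : NoDup (map f (seq 0 (S N)))).
  { apply NoDup_map_NoDup_ForallPairs; [|apply seq_NoDup].
    intros a b Ha Hb Hf. apply in_seq in Ha, Hb.
    destruct (lt_eq_lt_dec a b) as [[H|H]|H]; auto.
    - exfalso; apply Hno; exists a, b; split; auto; lia.
    - exfalso; apply Hno; exists b, a; split; auto; lia. }
  apply NoDup_incl_length with (l' := D) in Hnd.
  - rewrite length_map, length_seq in Hnd. lia.
  - intros z Hz. apply in_map_iff in Hz. destruct Hz as (i & <- & Hi).
    apply in_seq in Hi. apply HD. lia.
Qed.

Fixpoint lists {T} (R : list T) n : list (list T) :=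
  match n with
  | 0 => [[]]
  | S n => flat_map (fun a => map (cons a) (lists R n)) R
  end.

Lemma lists_complete {T} (R : list T) l : Forall (fun z => In z R) l -> In l (lists R (length l)).
Proof.
  induction l as [|a l IH]; intros H; simpl; auto.
  inversion H; subst. apply in_flat_map. exists a; split; auto. apply in_map; auto.
Qed.

Lemma map_eq_pt {T U} (f f' : T -> U) l y : map f l = map f' l -> In y l -> f y = f' y.
Proof.
  induction l as [|a l IH]; simpl; intros H Hy; [destruct Hy|].
  injection H; intros H1 H2. destruct Hy as [<-|Hy]; auto.
Qed.

Lemma sum_ge {T} (f : T -> nat) l y : In y l -> f y <= fold_right (fun z acc => f z + acc) 0 l.
Proof.
  induction l as [|a l IH]; simpl; intros Hy; [destruct Hy|].
  destruct Hy as [<-|Hy]; [lia|]. specialize (IH Hy); lia.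
Qed.

Section Grp.
Variable M : Monoid.
Variable A : list M.
Variable inv : M -> M.
Hypothesis Hinv : forall x, mmul M x (inv x) = mone M /\ mmul M (inv x) x = mone M.
Hypothesis HA : generates A.
Local Notation "x * y" := (mmul M x y).
Local Notation e := (mone M).
Local Notation E := (cayley_edge A).

Lemma translate_path g y l :
  dpath E y l -> dpath E (g * y) (map (mmul M g) l) /\ last (map (mmul M g) l) (g * y) = g * last l y.
Proof.
  revert y; induction l as [|z l IH]; intros y Hp; simpl; [split; auto|].
  destruct Hp as [(a & Ha & ->) Hp]. destruct (IH _ Hp) as [H1 H2].
  split. split; auto. exists a; split; auto. apply mmulA.
  change (last (g * (y * a) :: map (mmul M g) l) (g * y) = g * last (y * a :: l) y).
  rewrite !last_cons. exact H2.
Qed.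

Lemma dist_translate g x y n : dist_le E x y n -> dist_le E (g * x) (g * y) n.
Proof.
  intros (l & Hp & Hl & Hn). destruct (translate_path g _ _ Hp) as [H1 H2].
  exists (map (mmul M g) l); repeat split; auto. rewrite H2, Hl; auto. rewrite length_map; auto.
Qed.

Lemma dist_group x y n : dist_le E x y n <-> dist_le E e (inv x * y) n.
Proof.
  split; intros H.
  - rewrite <- (proj2 (Hinv x)). apply dist_translate; auto.
  - pose proof (dist_translate x _ _ _ H) as H'.
    rewrite mmul1r, mmulA, (proj1 (Hinv x)), mmul1l in H'. auto.
Qed.

Lemma word_path w : Forall (fun a => In a A) w -> forall y,
  dist_le E y (y * fold_right (mmul M) e w) (length w).
Proof.
  induction w as [|a w IH]; intros Hw y; simpl.
  - rewrite mmul1r. apply dist_le_refl.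
  - inversion Hw; subst. change (S (length w)) with (1 + length w).
    eapply dist_le_trans. apply dist_le_edge. exists a; split; eauto.
    rewrite mmulA. apply IH; auto.
Qed.

Lemma reach x : exists n, dist_le E e x n.
Proof.
  destruct (HA x) as (w & Hw & ->). exists (length w).
  pose proof (word_path w Hw e) as H. rewrite mmul1l in H. auto.
Qed.

Definition len (x : M) : nat :=
  proj1_sig (constructive_indefinite_description _
    (min_exists (fun n => dist_le E e x n) (reach x))).

Lemma len_spec1 x : dist_le E e x (len x).
Proof. unfold len. destruct constructive_indefinite_description as [n [H1 H2]]; auto. Qed.

Lemma len_spec2 x m : dist_le E e x m -> len x <= m.
Proof. unfold len. destruct constructive_indefinite_description as [n [H1 H2]]; auto. Qed.

Lemma len_mul x y : len (x * y) <= len x + len y.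
Proof.
  apply len_spec2. eapply dist_le_trans. apply len_spec1.
  rewrite <- (mmul1r M x) at 1. apply dist_translate, len_spec1.
Qed.

Lemma len_one : len e = 0.
Proof. pose proof (len_spec2 e 0 (dist_le_refl _ _ _)); lia. Qed.

Lemma len_dist x y n : dist_le E x y n -> len (inv x * y) <= n.
Proof. intros H; apply len_spec2; apply (proj1 (dist_group _ _ _)); auto. Qed.

Lemma dist_len x y : dist_le E x y (len (inv x * y)).
Proof. apply (proj2 (dist_group _ _ _)), len_spec1. Qed.

Lemma path_word y l : dpath E y l ->
  exists w, Forall (fun a => In a A) w /\ length w = length l /\
            last l y = y * fold_right (mmul M) e w.
Proof.
  revert y; induction l as [|z l IH]; intros y Hp.
  - exists []; simpl; repeat split; auto. rewrite mmul1r; auto.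
  - destruct Hp as [(a & Ha & ->) Hp]. destruct (IH _ Hp) as (w & H1 & H2 & H3).
    exists (a :: w); repeat split; auto. simpl; auto.
    rewrite last_cons, H3. simpl. rewrite mmulA; auto.
Qed.

Fixpoint words (k : nat) : list (list M) :=
  match k with
  | 0 => [[]]
  | S k => [] :: flat_map (fun a => map (cons a) (words k)) A
  end.

Lemma words_complete w k : Forall (fun a => In a A) w -> length w <= k -> In w (words k).
Proof.
  revert w; induction k as [|k IH]; intros w Hw Hl.
  - destruct w; simpl in *; auto; lia.
  - destruct w as [|a w]; simpl; auto. right. inversion Hw; subst.
    apply in_flat_map. exists a; split; auto. apply in_map. apply IH; auto. simpl in Hl; lia.
Qed.

Lemma words_sound w k : In w (words k) -> Forall (fun a => In a A) w /\ length w <= k.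
Proof.
  revert w; induction k as [|k IH]; intros w Hw; simpl in Hw.
  - destruct Hw as [<-|[]]; simpl; auto.
  - destruct Hw as [<-|Hw]; [simpl; split; auto; lia|].
    apply in_flat_map in Hw. destruct Hw as (a & Ha & Hw). apply in_map_iff in Hw.
    destruct Hw as (w' & <- & Hw'). destruct (IH _ Hw'). simpl; split; auto; lia.
Qed.

Definition ball k := map (fold_right (mmul M) e) (words k).

Lemma ball_complete x k : dist_le E e x k -> In x (ball k).
Proof.
  intros (l & Hp & Hl & Hk). destruct (path_word _ _ Hp) as (w & H1 & H2 & H3).
  rewrite mmul1l in H3. rewrite <- Hl, H3. apply in_map, words_complete; auto; lia.
Qed.

Lemma ball_sound x k : In x (ball k) -> dist_le E e x k.
Proof.
  intros H. apply in_map_iff in H. destruct H as (w & <- & Hw). destruct (words_sound _ _ Hw).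
  eapply dist_le_mono; eauto. pose proof (word_path w H e) as Hp. rewrite mmul1l in Hp. auto.
Qed.

Lemma inv_unique y z : y * z = e -> z = inv y.
Proof.
  intros H. rewrite <- (mmul1l M z), <- (proj2 (Hinv y)), <- mmulA, H, mmul1r. auto.
Qed.

Lemma cancel1 x z : x * (inv x * z) = z.
Proof. rewrite mmulA, (proj1 (Hinv x)), mmul1l; auto. Qed.
Lemma cancel2 x z : inv x * (x * z) = z.
Proof. rewrite mmulA, (proj2 (Hinv x)), mmul1l; auto. Qed.

Lemma geo_path x : exists l, dpath E e l /\ last l e = x /\ length l = len x /\
  forall l', dpath E e l' -> last l' e = x -> length l <= length l'.
Proof.
  destruct (len_spec1 x) as (l & H1 & H2 & H3).
  assert (len x <= length l) by (apply len_spec2; exists l; auto).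
  exists l; repeat split; auto; try lia.
  intros l' Hp Hl. assert (len x <= length l') by (apply len_spec2; exists l'; auto). lia.
Qed.

Variable d : nat.
Hypothesis Hhyp : delta_hyperbolic E d.

Definition C g h := len (g * h) = len g + len h.
Definition Bl := ball (2 * d + 1).
Definition tail_eq g g' := forall y, In y Bl ->
  len (g * inv y) + len g' = len (g' * inv y) + len g.

Lemma key g g' w : d + 1 <= len g' -> tail_eq g g' -> C g w -> C g' w.
Proof.
  intros Hg' Ht Hc. unfold C in *. pose proof (len_mul g' w).
  apply Nat.le_antisymm; auto. apply Nat.nlt_ge; intros Hlt.
  set (x := g' * w) in *.
  destruct (geo_path g') as (lP & HP1 & HP2 & HP3 & HP4).
  destruct (geo_path w) as (lw & Hw1 & Hw2 & Hw3 & Hw4).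
  destruct (geo_path x) as (lg & Hg1 & Hg2 & Hg3 & Hg4).
  set (k := len g' - d - 1).
  set (s := nth k (e :: lP) e).
  assert (Hs1 : dist_le E e s k).
  { pose proof (nth_dist _ E e lP 0 k HP1 ltac:(lia) ltac:(lia)) as H0.
    replace (k - 0) with k in H0 by lia. exact H0. }
  assert (Hs2 : dist_le E s g' (d + 1)).
  { pose proof (nth_dist _ E e lP k (length lP) HP1 ltac:(lia) ltac:(lia)) as H0.
    rewrite nth_last, HP2 in H0. replace (length lP - k) with (d + 1) in H0 by lia. exact H0. }
  assert (Hs3 : In s (e :: lP)) by (apply nth_In; simpl; lia).
  destruct (translate_path g' e lw Hw1) as [Hq1 Hq2].
  rewrite mmul1r, Hw2 in Hq2. rewrite mmul1r in Hq1.
  set (P1 := (e, lP)). set (P2 := (g', map (mmul M g') lw)). set (P3 := (e, lg)).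
  assert (Htri : geodesic_triangle E e g' x P1 P2 P3).
  { repeat split.
    - exact HP1.
    - intros l' H1 H2. unfold send in H2; simpl in H1, H2 |- *. apply HP4; congruence.
    - exact Hq1.
    - intros l' H1 H2. simpl in H1, H2. unfold send in H2; simpl in H2. rewrite Hq2 in H2.
      unfold P2; simpl snd. rewrite length_map, Hw3. rewrite <- (cancel2 g' w).
      apply len_dist. exists l'; auto.
    - exact Hg1.
    - intros l' H1 H2. unfold send in H2; simpl in H1, H2 |- *. apply Hg4; congruence.
    - left; split; auto.
    - left; split; auto.
    - left; split; auto. }
  destruct (Hhyp _ _ _ _ _ _ Htri) as (_ & Hthin & _).
  assert (Hr : exists r a b, dist_le E e r a /\ dist_le E r x b /\ a + b + 1 <= len g' + len w
     /\ dist_le E r g' (2 * d + 1)).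
  { destruct (Hthin (or_introl eq_refl) (or_introl HP2) s Hs3) as [(q & Hq & Hqs)|(q & Hq & Hsq)].
    - destruct (on_path_split _ _ _ _ _ Hg1 Hq) as (a & b & Hab & Ha & Hb).
      exists q, a, b. rewrite Hg2 in Hb. repeat split; auto. lia.
      replace (2 * d + 1) with (d + (d + 1)) by lia. eapply dist_le_trans; eauto.
    - destruct (on_path_split _ _ _ _ _ Hq1 Hq) as (a & b & Hab & Ha & Hb).
      rewrite Hq2, length_map in *. 
      exists s, k, (d + len w). repeat split; auto.
      + eapply dist_le_mono; [|eapply dist_le_trans; eauto]. lia.
      + lia.
      + eapply dist_le_mono; [|eauto]. lia. }
  destruct Hr as (r & a & b & Ha & Hb & Hab & Hrg).
  set (y := inv r * g').
  assert (Hy : In y Bl) by (apply ball_complete; apply (proj1 (dist_group _ _ _)); auto).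
  assert (Hiy : inv g' * r = inv y).
  { apply inv_unique. unfold y. rewrite <- mmulA, cancel1, (proj2 (Hinv r)). auto. }
  pose proof (Ht y Hy) as Hty. rewrite <- Hiy, cancel1 in Hty.
  assert (Hgw : g * w = (g * inv y) * (inv r * x)).
  { rewrite <- Hiy. unfold x. rewrite <- !mmulA, cancel1, cancel2. auto. }
  pose proof (len_mul (g * inv y) (inv r * x)) as Hm. rewrite <- Hgw in Hm.
  pose proof (len_dist _ _ _ Hb). pose proof (len_spec2 _ _ Ha). rewrite Hiy in Hty. lia.
Qed.

Definition ceq g1 g2 := forall h, C g1 h <-> C g2 h.

Lemma cone_prop g u h : C g u -> (C (g * u) h <-> C g (u * h) /\ C u h).
Proof.
  unfold C; intros Hgu. pose proof (len_mul g (u * h)). pose proof (len_mul u h).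
  pose proof (len_mul (g * u) h). rewrite <- mmulA in *. split; intros H'; [split|]; lia.
Qed.

Lemma ceq_step g1 g2 u : ceq g1 g2 -> C g1 u -> ceq (g1 * u) (g2 * u).
Proof.
  intros Hc Hu h. assert (Hu2 : C g2 u) by (apply Hc; auto).
  rewrite (cone_prop _ _ _ Hu), (cone_prop _ _ _ Hu2), (Hc (u * h)). tauto.
Qed.

Lemma pump g0 u : ceq g0 (g0 * u) -> C g0 u -> forall n,
  len (g0 * mpow u n) = len g0 + n * len u /\ ceq g0 (g0 * mpow u n).
Proof.
  intros Hc Hu n. induction n as [|n [IH1 IH2]].
  - simpl. rewrite mmul1r. split; [lia|]. intros h; tauto.
  - assert (Heq : g0 * mpow u (S n) = (g0 * mpow u n) * u).
    { simpl. rewrite <- mpow_comm, mmulA; auto. }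
    assert (Hu' : C (g0 * mpow u n) u) by (apply IH2; auto).
    rewrite Heq. split.
    + unfold C in Hu'. rewrite Hu', IH1. simpl; lia.
    + intros h. pose proof (Hc h).
      assert (Hs : ceq (g0 * mpow u n) g0) by (intros h'; pose proof (IH2 h'); tauto).
      pose proof (ceq_step _ _ _ Hs Hu' h). tauto.
Qed.

Definition tau (g : M) := map (fun y : M => (Z.of_nat (len (mmul M g (inv y))) - Z.of_nat (len g))%Z) Bl.

Lemma tau_tail g g' : tau g = tau g' -> tail_eq g g' /\ tail_eq g' g.
Proof.
  intros H. split; intros y Hy; pose proof (map_eq_pt _ _ _ _ H Hy) as H'; simpl in H'; lia.
Qed.

Definition Bd := fold_right (fun z acc => len (inv z) + acc) 0 Bl.
Definition Rng := map (fun k => (Z.of_nat k - Z.of_nat (2 * d + 1))%Z) (seq 0 (Bd + 2 * d + 2)).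
Definition Dom := lists Rng (length Bl).

Lemma tau_dom g : In (tau g) Dom.
Proof.
  unfold Dom. replace (length Bl) with (length (tau g)) by (unfold tau; apply length_map).
  apply lists_complete. apply Forall_forall. intros z Hz. unfold tau in Hz.
  apply in_map_iff in Hz. destruct Hz as (y & <- & Hy).
  pose proof (len_mul g (inv y)). pose proof (sum_ge (fun z => len (inv z)) Bl y Hy) as Hb.
  fold Bd in Hb. simpl in Hb.
  assert (Hly : len y <= 2 * d + 1) by (apply len_spec2, ball_sound; auto).
  pose proof (len_mul (g * inv y) y) as H2. rewrite <- mmulA, (proj2 (Hinv y)), mmul1r in H2.
  unfold Rng. apply in_map_iff.
  exists (Z.to_nat ((Z.of_nat (len (g * inv y)) - Z.of_nat (len g)) + Z.of_nat (2 * d + 1))).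
  assert (Hb' : len (inv y) <= Bd) by exact Hb.
  split; [rewrite Z2Nat.id; lia|]. apply in_seq. split; [lia|].
  apply Nat2Z.inj_lt. rewrite Z2Nat.id; lia.
Qed.

Hypothesis Hinf : infinite_monoid M.

Theorem main_sec : exists u : M, infinite_order u.
Proof.
  set (NT := length Dom). set (N := d + 1 + NT).
  assert (Hx : exists x, ~ In x (ball N)).
  { apply NNPP; intros Hn. apply Hinf. exists (ball N). intros x. apply NNPP; intros Hx.
    apply Hn; eauto. }
  destruct Hx as [x Hx].
  assert (HxN : N < len x).
  { apply Nat.nlt_ge; intros Hle. apply Hx, ball_complete. eapply dist_le_mono; [|apply len_spec1]. lia. }
  destruct (geo_path x) as (l & Hl1 & Hl2 & Hl3 & Hl4).
  set (g i := nth i (e :: l) e).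
  assert (Hg : forall i, i <= len x -> len (g i) = i).
  { intros i Hi. pose proof (nth_dist _ E e l 0 i Hl1 ltac:(lia) ltac:(lia)) as H1.
    pose proof (nth_dist _ E e l i (length l) Hl1 ltac:(lia) ltac:(lia)) as H2.
    rewrite nth_last, Hl2 in H2. fold (g i) in H1, H2. simpl in H1.
    replace (i - 0) with i in H1 by lia.
    pose proof (len_spec2 _ _ H1).
    pose proof (len_spec2 _ _ (dist_le_trans _ _ _ _ _ _ _ (len_spec1 (g i)) H2)). lia. }
  destruct (php (fun k => tau (g (d + 1 + k))) Dom NT) as (k1 & k2 & Hk & Hf).
  { intros; apply tau_dom. } { lia. }
  set (i := d + 1 + k1) in Hf. set (j := d + 1 + k2) in Hf.
  set (u := inv (g i) * g j).
  assert (Hgu : g i * u = g j) by apply cancel1.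
  assert (Hu1 : len u <= j - i).
  { apply len_dist. apply nth_dist; auto; lia. }
  pose proof (len_mul (g i) u) as Hu2. rewrite Hgu in Hu2.
  rewrite (Hg i), (Hg j) in Hu2 by lia.
  assert (HC : C (g i) u).
  { unfold C. rewrite Hgu, (Hg i), (Hg j) by lia. lia. }
  destruct (tau_tail _ _ Hf) as [Ht1 Ht2].
  assert (Hce : ceq (g i) (g i * u)).
  { rewrite Hgu. intros h; split; apply key; auto; [rewrite (Hg j)|rewrite (Hg i)]; lia. }
  exists u. intros m n Hmn.
  destruct (pump _ _ Hce HC m) as [Hm _]. destruct (pump _ _ Hce HC n) as [Hn _].
  rewrite Hmn in Hm. rewrite Hm in Hn. 
  assert (Hmn2 : Nat.mul m (len u) = Nat.mul n (len u)) by lia.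
  apply Nat.mul_cancel_r in Hmn2; auto. lia.
Qed.

End Grp.

Theorem theorem4p1 (M : Monoid) :
  infinite_monoid M -> cancellative M -> finitely_generated M ->
  hyperbolic_monoid M ->
  exists x : M, infinite_order x.
Proof.
  intros Hinf [Hcl Hcr] _ (A & HA & dd & Hhyp).
  destruct (classic (exists x : M, infinite_order x)) as [H|H]; auto.
  assert (Hex : forall x : M, exists y, mmul M x y = mone M /\ mmul M y x = mone M).
  { intros x. assert (Hx : ~ infinite_order x) by (intros Hx; apply H; eauto).
    unfold infinite_order in Hx.
    apply not_all_ex_not in Hx. destruct Hx as [m Hx].
    apply not_all_ex_not in Hx. destruct Hx as [n Hx].
    apply imply_to_and in Hx. destruct Hx as [Heq Hne].
    assert (Hgen : forall a b, a < b -> mpow x a = mpow x b ->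
              exists y, mmul M x y = mone M /\ mmul M y x = mone M).
    { intros a b Hab Hp. exists (mpow x (b - a - 1)).
      assert (Hb : mpow x b = mmul M (mpow x a) (mpow x (S (b - a - 1)))).
      { rewrite <- mpow_add. f_equal. lia. }
      rewrite Hb in Hp. rewrite <- (mmul1r M (mpow x a)) in Hp at 1.
      apply Hcl in Hp. simpl in Hp. split; auto. rewrite mpow_comm; auto. }
    destruct (Nat.lt_trichotomy m n) as [Hl|[Hl|Hl]].
    - apply (Hgen m n); auto.
    - contradiction.
    - apply (Hgen n m); auto. }
  set (inv := fun x => proj1_sig (constructive_indefinite_description _ (Hex x))).
  assert (Hinv : forall x, mmul M x (inv x) = mone M /\ mmul M (inv x) x = mone M).
  { intros x. unfold inv. destruct constructive_indefinite_description; auto. }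
  exact (main_sec M A inv Hinv HA dd Hhyp Hinf).
Qed.
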